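(* Let $K$ be a field, $S=K[x_1,\ldots,x_n]$, $I\subset S$ a monomial ideal with $I\ne S$, with $\mathbb{Z}^n$-graded minimal free resolution of $S/I$, multidegrees $a_{ij}$ and scalar matrices $\lambda^{(i)}$ as in the context. Given $1<i\le p$ and $1\le j\le\beta_i$, let $k_1,\ldots,k_r$ be the integers $k$ with $\lambda^{(i)}_{kj}\ne0$. Then \[ x^{a_{ij}}=\operatorname{lcm}(x^{a_{i-1,k_1}},\ldots,x^{a_{i-1,k_r}}). \]
   Context: For $a\in\mathbb{N}^n$, $x^a=x_1^{a(1)}\cdots x_n^{a(n)}$. Let $0\to F_p\to\cdots\to F_1\to F_0\to S/I\to 0$ be the $\mathbb{Z}^n$-graded minimal free resolution of $S/I$ with differential $\partial$, where $F_0=S$ with basis $f_{01}$ of degree $0$, and $F_i=\bigoplus_{j=1}^{\beta_i}Sf_{ij}$ with $f_{ij}$ homogeneous of multidegree $a_{ij}\in\mathbb{N}^n$. Write $\partial(f_{ij})=\sum_k\lambda^{(i)}_{kj}x^{a_{ij}-a_{i-1,k}}f_{i-1,k}$ with $\lambda^{(i)}_{kj}\in K$, where $\lambda^{(i)}_{kj}=0$ whenever $a_{ij}-a_{i-1,k}\notin\mathbb{N}^n$. *)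

(* Defs.v *)
From HB Require Import structures.
From mathcomp Require Import all_boot all_order all_algebra.
From mathcomp Require Import mpoly.
Set Implicit Arguments. Unset Strict Implicit. Unset Printing Implicit Defensive.
Import Order.TTheory GRing.Theory.
Local Open Scope ring_scope.

Definition is_ideal (K : fieldType) (n : nat) (I : {pred {mpoly K[n]}}) : Prop :=
  [/\ 0 \in I,
      (forall f g, f \in I -> g \in I -> f + g \in I) &
      (forall f g, g \in I -> f * g \in I)].

Definition is_monomial_ideal (K : fieldType) (n : nat) (I : {pred {mpoly K[n]}}) : Prop :=
  is_ideal I /\
  forall f, f \in I -> exists s : seq ({mpoly K[n]} * 'X_{1..n}),
      f = \sum_(x <- s) x.1 * 'X_[x.2] /\ (forall x, x \in s -> 'X_[x.2] \in I).

Definition mdivides (n : nat) (a b : 'X_{1..n}) : Prop := forall t : 'I_n, (a t <= b t)%N.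

Definition mnm_lcm (n : nat) (s : seq 'X_{1..n}) : 'X_{1..n} :=
  [multinom \max_(m <- s) m t | t < n].

(* Matrix of the differential  d i : F_{i+1} -> F_i  (paper's \partial_{i+1}),
   F_i = S^(beta i), columns = images of basis elements f_{i+1,j}. *)

(* Main.v *)
Require Import Defs.
From HB Require Import structures.
From mathcomp Require Import all_boot all_order all_algebra.
From mathcomp Require Import mpoly.
From mathcomp Require Import zify ring.
Import Order.TTheory GRing.Theory.
Local Open Scope ring_scope.

Lemma X_neq0 (K : fieldType) n (m : 'X_{1..n}) : 'X_[m] != 0 :> {mpoly K[n]}.
Proof.
apply/eqP => h; have := congr1 (mcoeff m) h.
by rewrite mcoeffX eqxx mcoeff0 => /eqP; rewrite oner_eq0.
Qed.

Theorem lemma1p5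
  (K : fieldType) (n : nat) (I : {pred {mpoly K[n]}})
  (p : nat) (beta : nat -> nat)
  (a : forall i : nat, 'I_(beta i) -> 'X_{1..n})
  (lambda : forall i : nat, 'I_(beta i) -> 'I_(beta i.+1) -> K)
  (d : forall i : nat, 'M[{mpoly K[n]}]_(beta i, beta i.+1)) :
  is_monomial_ideal I -> (1 : {mpoly K[n]}) \notin I ->
  beta 0%N = 1%N -> (forall j, a 0%N j = 0%MM) ->
  (forall i, (p < i)%N -> beta i = 0%N) ->
  (forall i k j, ~ mdivides (a i k) (a i.+1 j) -> lambda i k j = 0) ->
  (forall i k j, d i k j * 'X_[a i k] = (lambda i k j)%:MP * 'X_[a i.+1 j]) ->
  (forall f, f \in I <-> exists w : 'cV_(beta 1%N),
       forall r : 'I_(beta 0%N), (d 0%N *m w) r ord0 = f) ->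
  (forall i (v : 'cV_(beta i.+1)),
       d i *m v = 0 <-> exists w : 'cV_(beta i.+2), v = d i.+1 *m w) ->
  (forall i k j, (d i k j)@_0%MM = 0) ->
  forall i, (0 < i)%N -> (i < p)%N ->
  forall j : 'I_(beta i.+1),
    'X_[a i.+1 j] =
    'X_[mnm_lcm [seq a i k | k <- enum 'I_(beta i) & lambda i k j != 0]] :> {mpoly K[n]}.
Proof.
move=> _ _ _ _ _ Hdiv Hd _ Hex Hmin [|i'] // _ _ j.
set i := i'.+1.
set A := a i.+1 j.
set m := mnm_lcm _.
have mE t : m t = \max_(k <- enum 'I_(beta i) | lambda i k j != 0) a i k t.
  by rewrite /m /mnm_lcm mnmE big_map big_filter.
have divk k : lambda i k j != 0 -> forall t, (a i k t <= A t)%N.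
  move=> nz t; case: (boolP [forall t, (a i k t <= A t)%N]) => [/forallP//|/forallP h].
  by rewrite Hdiv ?eqxx in nz => // hd; apply: h => t'; apply: hd.
have le_km k : lambda i k j != 0 -> forall t, (a i k t <= m t)%N.
  by move=> nz t; rewrite mE; apply: (leq_bigmax_seq k) => //; rewrite mem_enum.
have le_mA t : (m t <= A t)%N.
  by rewrite mE; apply/bigmax_leqP_seq => k _ nz; apply: divk.
have [/eqP eqmA|neq] := boolP (m == A); first by rewrite eqmA.
exfalso.
set c := (A - m)%MM.
have c0 : c != 0%MM.
  apply: contra neq => /eqP c0; apply/eqP/mnmP => t.
  have := congr1 (fun x : 'X_{1..n} => x t) c0; rewrite /= mnmBE mnm0E => /eqP.
  by rewrite subn_eq0 => h; apply/eqP; rewrite eqn_leq le_mA h.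
pose g : 'cV[{mpoly K[n]}]_(beta i) :=
  \col_k ((lambda i k j)%:MP * 'X_[(m - a i k)%MM]).
have colj : d i *m delta_mx j ord0 = 'X_[c] *: g.
  apply/matrixP => k z; rewrite (ord1 z) !mxE.
  rewrite (bigD1 j) //= big1 => [|l /negPf nl]; last by rewrite mxE nl mulr0.
  rewrite mxE !eqxx mulr1 addr0.
  have := Hd i k j.
  have [l0|nz] := eqVneq (lambda i k j) 0.
    rewrite l0 mul0r mul0r => /eqP; rewrite mulf_eq0 (negPf (X_neq0 _ _ _)) orbF.
    by move/eqP->; rewrite mulr0.
  have eA : A = ((c + (m - a i k)) + a i k)%MM.
    apply/mnmP => t; rewrite !mnmDE !mnmBE.
    by have := le_km k nz t; have := le_mA t; lia.
  rewrite -/A eA !mpolyXD => h.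
  apply: (mulIf (X_neq0 _ _ (a i k))); rewrite h; ring.
have dg : d i' *m g = 0.
  have h0 : d i' *m (d i *m delta_mx j (ord0 : 'I_1)) = 0.
    by apply/(Hex i'); exists (delta_mx j ord0).
  move: h0; rewrite colj -scalemxAr => h0.
  apply/matrixP => r z; move/matrixP: h0 => /(_ r z).
  by rewrite !mxE => /eqP; rewrite mulf_eq0 (negPf (X_neq0 _ _ _)) => /eqP.
have [w gw] := (Hex i' g).1 dg.
have : d i *m (delta_mx j ord0 - 'X_[c] *: w) = 0.
  by rewrite mulmxBr colj -scalemxAr -gw subrr.
move=> /(Hex i) [u hu].
move/matrixP: hu => /(_ j ord0) /(congr1 (mcoeff 0%MM)).
rewrite !mxE !eqxx /= mcoeffB mcoeff1 eqxx.
rewrite (rmorphM (mcoeff 0%MM)) /= mcoeffX (negPf c0) mul0r subr0.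
rewrite (raddf_sum (mcoeff 0%MM)) big1 => [|l _].
  by move/eqP; rewrite oner_eq0.
by rewrite -[X in X = 0]/((d i.+1 j l * u l ord0)@_0%MM) (rmorphM (mcoeff 0%MM)) /= Hmin mul0r.
Qed.
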